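(* Let $\mathbb{Z}_{(p_n)}$ be an odometer with scale $(p_n)$ and let $m\in\mathbb{N}$. (i) If $\gcd(m,p_n)=1$ for all $n\in\mathbb{N}$, then $(\mathbb{Z}_{(p_n)},+\mathbf{m})$ is conjugate to $(\mathbb{Z}_{(p_n)},+\mathbf{1})$ and $\operatorname{Aut}(\mathbb{Z}_{(p_n)},+\mathbf{m})\cong\mathbb{Z}_{(p_n)}$. (ii) Suppose $\gcd(p_n,m)\neq1$ for some $n\in\mathbb{N}$. Let $m=a_1^{b_1}a_2^{b_2}\cdots a_l^{b_l}$ be the prime factorization of $m$, set $r_i=\min\{b_i,\mathbf{v}_{a_i}((p_n))\}$, $s=a_1^{r_1}\cdots a_l^{r_l}$ and $t=m/s$. Then there exists $k\in\mathbb{N}$ such that $s\mid p_k$ and $$\operatorname{Aut}(\mathbb{Z}_{(p_n)},+\mathbf{m})\subseteq\operatorname{Aut}(\mathbb{Z}_{(p_n)},+(t p_k)\mathbf{1})=\operatorname{Aut}(\mathbb{Z}_{(p_n)},+p_k\mathbf{1}).$$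
   Context: A scale is a sequence $(p_n)$ of positive integers with $p_n\mid p_{n+1}$, not eventually constant. The odometer is $\mathbb{Z}_{(p_n)}=\{(x_n)\in\prod_n\mathbb{Z}/p_n\mathbb{Z}: x_{n+1}\equiv x_n\bmod p_n\}$, a compact group; $\mathbf{1}=(1,1,\dots)$ and $\mathbf{m}=m\mathbf{1}$; $(\mathbb{Z}_{(p_n)},+\mathbf{m})$ denotes translation by $\mathbf{m}$. For a prime $p$, $\mathbf{v}_p((p_n))=\lim_n\nu_p(p_n)\in\mathbb{N}\cup\{0,\infty\}$ with $\nu_p$ the $p$-adic valuation. $\operatorname{Aut}(X,T)$ is the group of homeomorphisms of $X$ commuting with $T$. *)

(* Defs.v *)
From Stdlib Require Import ClassicalEpsilon.
From mathcomp Require Import all_boot.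

Set Implicit Arguments.
Unset Strict Implicit.
Unset Printing Implicit Defensive.

Record scale := Scale {
  sc :> nat -> nat;
  sc_pos : forall n, 0 < sc n;
  sc_dvd : forall n, sc n %| sc n.+1;
  sc_nconst : ~ (exists N, forall n, N <= n -> sc n = sc N)
}.

(* The odometer Z_(p_n): sequences (x_n) with x_n in Z/p_n Z (represented by
   0 <= x_n < p_n) and x_(n+1) = x_n mod p_n. *)
Record odo (P : scale) := Odo {
  oval :> nat -> nat;
  oval_lt : forall n, oval n < P n;
  oval_comp : forall n, oval n.+1 %% P n = oval n
}.

Definition oadd (P : scale) (x y : odo P) : odo P.
Proof.
refine (@Odo P (fun n => (x n + y n) %% P n) _ _).
- by move=> n; rewrite ltn_pmod // sc_pos.
- move=> n; rewrite (modn_dvdm _ (sc_dvd P n)) -[in RHS]modnDm -modnDm !oval_comp.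
  by rewrite modnDm.
Defined.

Definition ocst (P : scale) (k : nat) : odo P.
Proof.
refine (@Odo P (fun n => k %% P n) _ _).
- by move=> n; rewrite ltn_pmod // sc_pos.
- by move=> n; rewrite (modn_dvdm _ (sc_dvd P n)).
Defined.

Definition otr (P : scale) (k : nat) (x : odo P) : odo P := oadd x (ocst P k).

(* Continuity for the product topology of the discrete spaces Z/p_n Z:
   each output coordinate only depends on finitely many input coordinates
   locally (preimages of basic cylinders are open). *)
Definition ocont (P : scale) (f : odo P -> odo P) : Prop :=
  forall (x : odo P) (n : nat), exists N : nat,
    forall y : odo P, (forall i, i <= N -> y i = x i) -> f y n = f x n.

Definition ohomeo (P : scale) (h : odo P -> odo P) : Prop :=
  ocont h /\ exists g : odo P -> odo P, cancel h g /\ cancel g h /\ ocont g.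

Definition oAut (P : scale) (T : odo P -> odo P) (h : odo P -> odo P) : Prop :=
  ohomeo h /\ forall x, h (T x) = T (h x).

Definition oconj (P : scale) (T S : odo P -> odo P) : Prop :=
  exists h : odo P -> odo P, ohomeo h /\ forall x, h (T x) = S (h x).

Definition Aut_iso_odo (P : scale) (T : odo P -> odo P) : Prop :=
  exists phi : odo P -> (odo P -> odo P),
    (forall a, oAut T (phi a)) /\
    (forall h, oAut T h -> exists a, phi a = h) /\
    (forall a b, phi a = phi b -> a = b) /\
    (forall a b, phi (oadd a b) = (phi a) \o (phi b)).

(* extended naturals N u {oo}: None = oo *)
Definition enat := option nat.

(* v_a((p_n)) = lim_n nu_a(p_n) in N u {oo}; the sequence is nondecreasing, so
   the limit is finite iff it is eventually constant. *)
Definition vp (P : scale) (a : nat) : enat :=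
  match excluded_middle_informative
          (exists e N, forall n, N <= n -> logn a (P n) = e) with
  | left H => Some (proj1_sig (constructive_indefinite_description _ H))
  | right _ => None
  end.

Definition emin (b : nat) (v : enat) : nat :=
  match v with Some e => minn b e | None => b end.

Definition s_of (P : scale) (m : nat) : nat :=
  \prod_(a <- primes m) a ^ emin (logn a m) (vp P a).

Definition t_of (P : scale) (m : nat) : nat := m %/ s_of P m.

(* Main.v *)
Require Import Defs.
From mathcomp Require Import all_boot zify.
From Stdlib Require Import ProofIrrelevance FunctionalExtensionality Classical ClassicalEpsilon.
Set Implicit Arguments. Unset Strict Implicit. Unset Printing Implicit Defensive.

Section S.
Variable P : scale.

Lemma odo_eq (x y : odo P) : (forall n, x n = y n) -> x = y.
Proof.
case: x y => [x xl xc] [y yl yc] /= H.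
have E : x = y by apply: functional_extensionality.
subst y; f_equal; apply: proof_irrelevance.
Qed.

Lemma P_dvd_le i j : i <= j -> P i %| P j.
Proof.
elim: j => [|j IH]; first by rewrite leqn0 => /eqP ->.
rewrite leq_eqVlt => /orP [/eqP -> //|]; rewrite ltnS => /IH H.
exact: dvdn_trans H (sc_dvd P j).
Qed.

Lemma ocomp_le (x : odo P) i j : i <= j -> x j %% P i = x i.
Proof.
elim: j => [|j IH]; first by rewrite leqn0 => /eqP ->; rewrite modn_small // oval_lt.
rewrite leq_eqVlt => /orP [/eqP -> |]; first by rewrite modn_small // oval_lt.
rewrite ltnS => Hij; rewrite -(IH Hij).
by rewrite -(oval_comp x j) (modn_dvdm _ (P_dvd_le Hij)).
Qed.

Lemma oaddC (x y : odo P) : oadd x y = oadd y x.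
Proof. by apply: odo_eq => n /=; rewrite addnC. Qed.

Lemma oaddA (x y z : odo P) : oadd x (oadd y z) = oadd (oadd x y) z.
Proof. by apply: odo_eq => n /=; rewrite modnDml modnDmr addnA. Qed.

Lemma oadd0 (x : odo P) : oadd x (ocst P 0) = x.
Proof. by apply: odo_eq => n /=; rewrite mod0n addn0 modn_small // oval_lt. Qed.

Lemma ocstD a b : ocst P (a + b) = oadd (ocst P a) (ocst P b).
Proof. by apply: odo_eq => n /=; rewrite modnDm. Qed.

Lemma otrD a b (x : odo P) : otr a (otr b x) = otr (b + a) x.
Proof. by rewrite /otr -oaddA ocstD. Qed.

Lemma otr0 (x : odo P) : otr 0 x = x.
Proof. exact: oadd0. Qed.

Definition oneg (a : odo P) : odo P.
Proof.
refine (@Odo P (fun n => (P n - a n) %% P n) _ _).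
- by move=> n; rewrite ltn_pmod // sc_pos.
- move=> n; rewrite (modn_dvdm _ (sc_dvd P n)); apply/eqP.
  rewrite -(eqn_modDr (a n.+1)) subnK; last exact: ltnW (oval_lt _ _).
  apply/eqP; rewrite -modnDmr oval_comp subnK; last exact: ltnW (oval_lt _ _).
  by rewrite modnn; apply/eqP; exact: sc_dvd.
Defined.

Lemma oaddN (a : odo P) : oadd a (oneg a) = ocst P 0.
Proof.
apply: odo_eq => n /=; rewrite modnDmr subnKC ?modnn ?mod0n //.
exact: ltnW (oval_lt _ _).
Qed.


Lemma oadd_cont (a : odo P) : ocont (fun x : odo P => oadd x a).
Proof. by move=> x n; exists n => y Hy /=; rewrite Hy. Qed.

Lemma trans_homeo (a : odo P) : ohomeo (fun x : odo P => oadd x a).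
Proof.
split; first exact: oadd_cont.
exists (fun x => oadd x (oneg a)); split; [|split].
- by move=> x; rewrite -oaddA oaddN oadd0.
- by move=> x; rewrite -oaddA (oaddC (oneg a)) oaddN oadd0.
- exact: oadd_cont.
Qed.

Lemma otr_iter (h : odo P -> odo P) g :
  (forall x, h (otr g x) = otr g (h x)) ->
  forall j x, h (otr (j * g) x) = otr (j * g) (h x).
Proof.
move=> H; elim=> [|j IH] x; first by rewrite mul0n !otr0.
by rewrite mulSn -otrD IH H otrD.
Qed.

Lemma transfer (h : odo P -> odo P) g (y : odo P) :
  ocont h -> (forall x, h (otr g x) = otr g (h x)) ->
  (forall N, exists j, (j * g) %% P N = y N) ->
  forall x, h (oadd x y) = oadd (h x) y.
Proof.
move=> hc hT Hy x; apply: odo_eq => n.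
have [N HN] := hc (oadd x y) n.
have [j Hj] := Hy (maxn N n).
have Hi : forall i, i <= maxn N n -> (j * g) %% P i = y i.
  move=> i Hi; rewrite -(ocomp_le y Hi) -Hj.
  by rewrite (modn_dvdm _ (P_dvd_le Hi)).
rewrite -(HN (otr (j * g) x)).
  by rewrite otr_iter //= Hi // leq_maxr.
by move=> i Hi'; rewrite /= Hi // (leq_trans Hi') // leq_maxl.
Qed.


Lemma inv_ex m p : 0 < m -> coprime m p -> exists z, (z * m) %% p = 1 %% p.
Proof.
move=> m0 /(coprimeP _ m0) [[a b] /= H].
exists a; have -> : a * m = b * p + 1 by lia.
by rewrite modnMDl.
Qed.

Lemma inv_uniq z z' m p : z < p -> z' < p -> (z * m) %% p = 1 %% p ->
  (z' * m) %% p = 1 %% p -> z = z'.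
Proof.
move=> zp z'p H H'.
rewrite -(modn_small zp) -(modn_small z'p) -[z]muln1 -[z']muln1.
have E1 : (z * 1) %% p = (z * (z' * m)) %% p by rewrite -modnMmr -H' modnMmr.
have E2 : (z' * 1) %% p = (z' * (z * m)) %% p by rewrite -modnMmr -H modnMmr.
by rewrite E1 E2 mulnCA.
Qed.

Definition omulc (c : odo P) (x : odo P) : odo P.
Proof.
refine (@Odo P (fun n => (x n * c n) %% P n) _ _).
- by move=> n; rewrite ltn_pmod // sc_pos.
- move=> n; rewrite (modn_dvdm _ (sc_dvd P n)).
  by rewrite -modnMm !oval_comp.
Defined.

Lemma omulc_cont c : ocont (omulc c).
Proof. by move=> x n; exists n => y Hy /=; rewrite Hy. Qed.

Lemma unit_ex m : 0 < m -> (forall n, coprime m (P n)) ->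
  exists u : odo P, forall n, (u n * m) %% P n = 1 %% P n.
Proof.
move=> m0 Hc.
pose pr n z := (z < P n) && ((z * m) %% P n == 1 %% P n).
have ex n : exists z, pr n z.
  have [z Hz] := inv_ex m0 (Hc n).
  exists (z %% P n); rewrite /pr ltn_pmod ?sc_pos //=.
  by rewrite modnMml Hz.
have U n : pr n (xchoose (ex n)) := xchooseP (ex n).
have Ul n : xchoose (ex n) < P n by case/andP: (U n).
have Ue n : (xchoose (ex n) * m) %% P n = 1 %% P n by case/andP: (U n) => _ /eqP.
unshelve eexists (@Odo P (fun n => xchoose (ex n)) Ul _).
- move=> n; apply: inv_uniq; [exact: ltn_pmod (sc_pos P n)| exact: Ul | |exact: Ue].
  rewrite modnMml -(modn_dvdm _ (sc_dvd P n)) Ue.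
  by rewrite (modn_dvdm _ (sc_dvd P n)).
- by move=> n /=; exact: Ue.
Qed.


Lemma part1 m : 0 < m -> (forall n, coprime m (P n)) ->
  oconj (@otr P m) (@otr P 1) /\ Aut_iso_odo (@otr P m).
Proof.
move=> m0 Hc; have [u Hu] := unit_ex m0 Hc.
have Hu' n : (m * u n) %% P n = 1 %% P n by rewrite mulnC.
split.
  exists (omulc u); split; last first.
    move=> x; apply: odo_eq => n /=.
    rewrite modnMml mulnDl -modnDmr modnMml Hu' modnDmr.
    by rewrite modnDm.
  split; first exact: omulc_cont.
  exists (omulc (ocst P m)); split; [|split; last exact: omulc_cont].
  - move=> x; apply: odo_eq => n /=.
    rewrite modnMml -mulnA -modnMmr [X in x n * X]modnMmr Hu modnMmr.
    rewrite muln1 modn_small //; exact: oval_lt.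
  - move=> x; apply: odo_eq => n /=.
    rewrite modnMml -mulnA -modnMmr modnMml Hu' modnMmr muln1 modn_small //.
    exact: oval_lt.
exists (fun a x => oadd x a); split; [|split; [|split]].
- move=> a; split; first exact: trans_homeo.
  by move=> x; rewrite /otr -!oaddA (oaddC (ocst P m)).
- move=> h [[hc _] hT]; exists (h (ocst P 0)).
  apply: functional_extensionality => x.
  have := transfer hc hT (y := x).
  move=> Ht; rewrite (oaddC x) -{2}(oadd0 x) (oaddC x) Ht // => N; exists (x N * u N).
  rewrite -mulnA -modnMmr Hu modnMmr muln1 modn_small //; exact: oval_lt.
- move=> a b /(congr1 (fun f => f (ocst P 0))).
  by rewrite !(oaddC (ocst P 0)) !oadd0.
- move=> a b; apply: functional_extensionality => x /=.
  by rewrite (oaddC a b) oaddA.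
Qed.


Lemma bounded_stab (f : nat -> nat) B :
  (forall i j, i <= j -> f i <= f j) -> (forall n, f n < B) ->
  exists e N, forall n, N <= n -> f n = e.
Proof.
move=> fm; elim: B => [|B IH] fB; first by have := fB 0.
case: (classic (exists n0, f n0 = B)) => [[n0 Hn0]|Hno].
  exists B, n0 => n Hn; have := fm _ _ Hn; have := fB n; lia.
apply: IH => n; have := fB n; have : f n <> B by move=> E; apply: Hno; exists n.
lia.
Qed.

Lemma logn_mono a i j : i <= j -> logn a (P i) <= logn a (P j).
Proof. by move=> Hij; apply: dvdn_leq_log; [exact: sc_pos | exact: P_dvd_le]. Qed.

Lemma per_prime a b : exists K, forall n, K <= n ->
  emin b (vp P a) <= logn a (P n) /\
  (emin b (vp P a) < b -> logn a (P n) = emin b (vp P a)).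
Proof.
rewrite /vp; case: excluded_middle_informative => [H|H].
  case: (constructive_indefinite_description _ H) => e [N HN] /=.
  exists N => n Hn; rewrite HN //; lia.
case: (classic (exists K, b <= logn a (P K))) => [[K HK]|Hno].
  exists K => n Hn /=; split; last by rewrite ltnn.
  exact: leq_trans HK (logn_mono a Hn).
exfalso; apply: H; apply: (@bounded_stab _ b).
  by move=> i j; exact: logn_mono.
by move=> n; rewrite ltnNge; apply/negP => Hb; apply: Hno; exists n.
Qed.

End S.

Lemma logn_prod q (l : seq nat) (f : nat -> nat) : prime q -> uniq l ->
  all prime l ->
  logn q (\prod_(a <- l) a ^ f a) = if q \in l then f q else 0.
Proof.
move=> pq; elim: l => [|a l IH] /=; first by rewrite big_nil logn1.
case/andP=> al ul /andP [pa pl]; rewrite big_cons lognM; last first.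
- rewrite big_seq; apply: prodn_cond_gt0 => i il.
  by rewrite expn_gt0 prime_gt0 //; exact: (allP pl).
- by rewrite expn_gt0 prime_gt0.
rewrite lognX logn_prime // IH // in_cons.
case: eqP => [->|_] /=; last by rewrite muln0.
by rewrite (negbTE al) muln1 addn0.
Qed.

Lemma dvd_logn d n : 0 < d -> 0 < n ->
  (forall p, prime p -> logn p d <= logn p n) -> d %| n.
Proof.
move=> d0 n0 H; apply/dvdn_partP => // p.
rewrite mem_primes => /and3P [pp _ _].
by rewrite p_part pfactor_dvdn // H.
Qed.

Lemma emin_le b v : emin b v <= b.
Proof. by case: v => [e|] //=; exact: geq_minl. Qed.

Lemma part2 (P : scale) m : 0 < m -> exists k : nat,
       s_of P m %| P k /\
       (forall h, oAut (@otr P m) h -> oAut (@otr P (t_of P m * P k)) h) /\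
       (forall h, oAut (@otr P (t_of P m * P k)) h <-> oAut (@otr P (P k)) h).
Proof.
move=> m0.
pose R a n := emin (logn a m) (vp P a) <= logn a (P n) /\
  (emin (logn a m) (vp P a) < logn a m -> logn a (P n) = emin (logn a m) (vp P a)).
have Kl : forall l : seq nat, exists K, forall a, a \in l -> forall n, K <= n -> R a n.
  elim=> [|a l [K HK]]; first by exists 0.
  have [Ka HKa] := per_prime P a (logn a m).
  exists (maxn Ka K) => a'; rewrite in_cons => /orP [/eqP ->|al] n Hn.
    by apply: HKa; exact: leq_trans (leq_maxl _ _) Hn.
  by apply: HK => //; exact: leq_trans (leq_maxr _ _) Hn.
have [k Hk] := Kl (primes m).
exists k.
have prl : all prime (primes m).
  by apply/allP => a; rewrite mem_primes => /andP [].
have ls q : prime q -> logn q (s_of P m) =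
    if q \in primes m then emin (logn q m) (vp P q) else 0.
  by move=> pq; rewrite /s_of logn_prod // primes_uniq.
have s0 : 0 < s_of P m.
  rewrite /s_of big_seq; apply: prodn_cond_gt0 => i il.
  by rewrite expn_gt0 prime_gt0 //; exact: (allP prl).
have sm : s_of P m %| m.
  apply: dvd_logn => // q pq; rewrite ls //.
  by case: ifP => // _; exact: emin_le.
have sk : s_of P m %| P k.
  apply: dvd_logn => //; first exact: sc_pos.
  move=> q pq; rewrite ls //; case: ifP => // qm.
  by case: (Hk q qm k (leqnn k)).
set s := s_of P m in ls s0 sm sk *.
have Et : t_of P m * P k = (P k %/ s) * m.
  by rewrite /t_of -/s -{1}(divnK sk) mulnCA divnK.
have t0 : 0 < t_of P m by rewrite /t_of divn_gt0 // dvdn_leq.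
have cop N : k <= N -> coprime (t_of P m) (P N %/ P k).
  move=> kN; have dkN := P_dvd_le P kN.
  have Q0 : 0 < P N %/ P k by rewrite divn_gt0 ?sc_pos // dvdn_leq ?sc_pos.
  rewrite /coprime; case: (eqVneq (gcdn (t_of P m) (P N %/ P k)) 1) => // Hg.
  exfalso.
  have g1 : 1 < gcdn (t_of P m) (P N %/ P k).
    have : 0 < gcdn (t_of P m) (P N %/ P k) by rewrite gcdn_gt0 t0.
    move: Hg; case: (gcdn _ _) => [|[|]] //.
  have pq := pdiv_prime g1.
  set q := pdiv _ in pq.
  have qt : q %| t_of P m := dvdn_trans (pdiv_dvd _) (dvdn_gcdl _ _).
  have qQ : q %| P N %/ P k := dvdn_trans (pdiv_dvd _) (dvdn_gcdr _ _).
  have lt : 0 < logn q (t_of P m) by rewrite logn_gt0 mem_primes pq t0 qt.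
  have lQ : 0 < logn q (P N %/ P k) by rewrite logn_gt0 mem_primes pq Q0 qQ.
  move: lt lQ; rewrite /t_of logn_div // logn_div // ls //.
  have qm : q \in primes m.
    rewrite mem_primes pq m0 /=; apply: dvdn_trans qt _.
    by rewrite /t_of -/s; apply: dvdn_trans (dvdn_mulr s (dvdnn _)) _; rewrite divnK.
  rewrite qm subn_gt0 => Hlt.
  have [_ E1] := Hk q qm N kN.
  have [_ E2] := Hk q qm k (leqnn k).
  by rewrite (E1 Hlt) (E2 Hlt) subnn.
split => //; split.
  move=> h [hh hT]; split => //; rewrite Et; exact: (otr_iter hT).
move=> h; split => [[hh hT]|[hh hT]]; split => //; last first.
  exact: (otr_iter hT (t_of P m)).
move=> x; apply: (transfer hh.1 hT (y := ocst P (P k))) => N.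
case: (leqP N k) => [Nk|kN].
  exists 0; rewrite mod0n; apply/esym/eqP; exact: P_dvd_le.
have dkN := P_dvd_le P (ltnW kN).
have [z Hz] := inv_ex t0 (cop N (ltnW kN)).
exists z => /=; rewrite -(divnK dkN) mulnA -muln_modl Hz.
by rewrite muln_modl mul1n.
Qed.

Theorem proposition3p1 (P : scale) (m : nat) (Hm : 0 < m) :
  ((forall n, coprime m (P n)) ->
     oconj (@otr P m) (@otr P 1) /\ Aut_iso_odo (@otr P m))
  /\
  ((exists n, gcdn m (P n) != 1) ->
     exists k : nat,
       s_of P m %| P k /\
       (forall h, oAut (@otr P m) h -> oAut (@otr P (t_of P m * P k)) h) /\
       (forall h, oAut (@otr P (t_of P m * P k)) h <-> oAut (@otr P (P k)) h)).
Proof.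
split; first exact: part1.
by move=> _; exact: part2.
Qed.
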